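(* For integers $n,k\geqslant 1$, let $\mathfrak{C}_{n,k}$ be the set of words $\omega=(\omega_1,\dots,\omega_n)$ of length $n$ on the alphabet $\{1,\dots,k\}$ that avoid both patterns $010$ and $000$, contain every letter of $\{1,\dots,k\}$, and satisfy $\omega_1=k$; let $\mathfrak{c}_{n,k}=\#\mathfrak{C}_{n,k}$, with $\mathfrak{c}_{0,k}=0$ for $k\geqslant1$. Then for all $n,k\geqslant 2$, $$\mathfrak{c}_{n,k}=(n-1)\,\mathfrak{c}_{n-1,k-1}+(n-2)\,\mathfrak{c}_{n-2,k-1}.$$
   Context: A word contains a pattern $p$ if some subsequence of it is order-isomorphic to $p$; otherwise it avoids $p$. Avoiding $010$ means no $i<j<l$ with $\omega_i=\omega_l<\omega_j$; avoiding $000$ means no letter occurs three or more times. *)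

(* Defs.v *)
From mathcomp Require Import all_boot.
Set Implicit Arguments. Unset Strict Implicit. Unset Printing Implicit Defensive.

(* A word of length n over {1,...,k} is an n.-tuple over 'I_k;
   letter a+1 of the paper is encoded by the ordinal a. *)

Definition contains010 n k (w : n.-tuple 'I_k) : bool :=
  [exists i : 'I_n, exists j : 'I_n, exists l : 'I_n,
     [&& i < j, j < l, tnth w i == tnth w l & tnth w i < tnth w j]].

Definition contains000 n k (w : n.-tuple 'I_k) : bool :=
  [exists i : 'I_n, exists j : 'I_n, exists l : 'I_n,
     [&& i < j, j < l, tnth w i == tnth w j & tnth w j == tnth w l]].

Definition surjective_word n k (w : n.-tuple 'I_k) : bool :=
  [forall a : 'I_k, a \in w].

(* first letter equals k (the largest letter, encoded k-1); requires n >= 1 *)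
Definition starts_with_max n k (w : n.-tuple 'I_k) : bool :=
  [exists i : 'I_n, (val i == 0) && (val (tnth w i) == k.-1)].

Definition C_set n k : {set n.-tuple 'I_k} :=
  [set w | [&& ~~ contains010 w, ~~ contains000 w,
              surjective_word w & starts_with_max w]].

Definition c_num n k : nat := #|C_set n k|.

(* Main.v *)
Require Import Defs.
From mathcomp Require Import all_boot zify.
Set Implicit Arguments. Unset Strict Implicit. Unset Printing Implicit Defensive.

Lemma subseq_consP (T : eqType) (x0 x : T) t s :
  subseq (x :: t) s <-> exists i, [/\ i < size s, nth x0 s i = x & subseq t (drop i.+1 s)].
Proof.
elim: s => [|y s IH] /=.
  by split=> // [[i []]].
split.
  case: eqP => [<- H|_ /IH [i [H1 H2 H3]]]; first by exists 0; rewrite drop0.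
  by exists i.+1.
move=> [[|i] [/= H1 H2 H3]].
  by rewrite H2 eqxx; rewrite drop0 in H3.
have Hs: subseq (x :: t) s by apply/IH; exists i.
case: eqP => // _; apply: subseq_trans Hs; exact: subseq_cons.
Qed.

Lemma sub3P (s : seq nat) x y z : subseq [:: x; y; z] s <->
  exists i j l, [/\ i < j, j < l, l < size s & [/\ nth 0 s i = x, nth 0 s j = y & nth 0 s l = z]].
Proof.
split.
  move/(subseq_consP 0) => [i [Hi Hx /(subseq_consP 0) [j [Hj Hy /(subseq_consP 0) [l [Hl Hz _]]]]]].
  rewrite size_drop in Hj; rewrite nth_drop in Hy.
  rewrite drop_drop size_drop in Hl; rewrite drop_drop nth_drop in Hz.
  exists i, (i.+1 + j), (j.+1 + (i.+1) + l); split; [lia|lia| |split=>//].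
  move: Hl; rewrite ltn_subRL. by [].
move=> [i [j [l [Hij Hjl Hl [Hx Hy Hz]]]]].
have Hsz: size (s : seq (Equality.sort nat)) = size s by [].
apply/(subseq_consP 0); exists i; split => //; first (rewrite Hsz; lia).
apply/(subseq_consP 0); exists (j - i.+1); rewrite size_drop nth_drop; split; first (rewrite Hsz; lia).
  by rewrite subnKC.
apply/(subseq_consP 0); exists (l - j.+1); rewrite drop_drop size_drop nth_drop; split => //; first (rewrite Hsz; lia).
  by have ->: (j - i.+1).+1 + i.+1 + (l - j.+1) = l by lia.
exact: sub0seq.
Qed.

Definition zfree (s : seq nat) := 0 \notin s.

Definition good k (s : seq nat) :=
  [/\ all (fun x => x < k) s,
      (forall a b, a <= b -> ~~ subseq [:: a; b; a] s),
      (forall a, a < k -> a \in s) &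
      ohead s = Some k.-1].

Lemma map_SP (u : seq nat) : zfree u -> map S (map predn u) = u.
Proof.
move=> H; rewrite -map_comp; rewrite -[RHS]map_id; apply/eq_in_map => x Hx /=.
by apply: prednK; case: x Hx => // /[dup] Hx; rewrite (negbTE H).
Qed.

Lemma map_PS (u : seq nat) : map predn (map S u) = u.
Proof. by rewrite -map_comp map_id. Qed.

Lemma zfree_mapS u : zfree (map S u).
Proof. by rewrite /zfree; apply/mapP => [[x _]]. Qed.

Lemma subseq_shift s u t : filter (fun x => x != 0) s = map S u -> zfree t ->
  subseq t s = subseq (map predn t) u.
Proof.
move=> Hf Ht.
have ->: subseq t s = subseq t (filter (fun x => x != 0) s).
  rewrite subseq_filter; have -> //: all (fun x => x != 0) t.
  by apply/allP => x Hx; apply: contra Ht => /eqP <-.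
rewrite Hf; apply/idP/idP => H.
  by rewrite -(map_PS u); apply: map_subseq.
by rewrite -(map_SP Ht); apply: map_subseq.
Qed.

Definition zeroOK (s : seq nat) := forall b, ~~ subseq [:: 0; b; 0] s.

Lemma good_gen k s u : 0 \in s -> filter (fun x => x != 0) s = map S u ->
  ohead s = ohead (map S u) ->
  good k.+1 s <-> good k u /\ zeroOK s.
Proof.
move=> H0 Hf Hh.
have memS x : x != 0 -> (x \in s) = (x.-1 \in u).
  move=> Hx; have -> : (x \in s) = (x \in filter (fun x => x != 0) s) by rewrite mem_filter Hx.
  rewrite Hf; case: x Hx => // x _ /=; by rewrite mem_map //; move=> a b [].
split.
  move=> [Ha Hp Hs Hhd]; split; last first.
    by move=> b; apply: Hp.
  split.
  - apply/allP => x Hx.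
    have Hsx: x.+1 \in s by rewrite memS.
    by move/allP: Ha => /(_ _ Hsx).
  - move=> a b Hab; have := Hp a.+1 b.+1 Hab.
    by rewrite (subseq_shift Hf) // /zfree.
  - move=> a Ha'; by rewrite -(memS a.+1) // Hs.
  - by move: Hhd; rewrite Hh; case: u {Hf Hh memS} => //= x _ [<-].
move=> [[Ha Hp Hs Hhd] Hz]; split.
- apply/allP => x Hx; case: x Hx => // x Hx.
  by rewrite memS //= in Hx; move/allP: Ha => /(_ _ Hx).
- move=> [|a] b Hab; first exact: Hz.
  case: b Hab => // b Hab.
  by rewrite (subseq_shift Hf) // ?Hp // /zfree.
- move=> [|a] Ha' //; by rewrite memS //= Hs.
- rewrite Hh; case: u {Hf Hh memS Hp Hs} Ha Hhd => //= x u /andP [Hx _] [->]; by case: k Hx.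
Qed.

Lemma subseq_skip0 (L s t : seq nat) : zfree L -> subseq (0 :: t) (L ++ s) = subseq (0 :: t) s.
Proof.
elim: L => [//|x L IH] /=; rewrite /zfree inE negb_or => /andP [Hx HL].
by rewrite (negbTE Hx) IH.
Qed.

Lemma zeroOK1 L R : zfree L -> zfree R -> zeroOK (L ++ 0 :: R).
Proof.
move=> HL HR b; rewrite subseq_skip0 //=; case: b => [|b] /=; apply/negP => /mem_subseq H; move: HR;
  by rewrite /zfree H // !inE eqxx ?orbT.
Qed.

Lemma zeroOK2 L R : zfree L -> zfree R -> zeroOK (L ++ 0 :: 0 :: R).
Proof.
move=> HL HR b; rewrite subseq_skip0 //=; case: b => [|b] /=; apply/negP => /mem_subseq H; move: HR;
  by rewrite /zfree H // !inE eqxx ?orbT.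
Qed.

Lemma filter_zfree L : zfree L -> filter (fun x => x != 0) L = L.
Proof.
move=> H; apply/all_filterP/allP => x Hx; apply: contra H => /eqP <-; done.
Qed.

Lemma zfree_cat L R : zfree (L ++ R) = zfree L && zfree R.
Proof. by rewrite /zfree mem_cat negb_or. Qed.

Lemma good1 k L R : zfree L -> zfree R -> L != [::] ->
  good k.+1 (L ++ 0 :: R) <-> good k (map predn (L ++ R)).
Proof.
move=> HL HR HL0.
have HLR : zfree (L ++ R) by rewrite zfree_cat HL HR.
have H1 : 0 \in L ++ 0 :: R by rewrite mem_cat inE eqxx orbT.
have H2 : filter (fun x => x != 0) (L ++ 0 :: R) = map S (map predn (L ++ R)).
  by rewrite map_SP // filter_cat /= filter_zfree // filter_zfree.
have H3 : ohead (L ++ 0 :: R) = ohead (map S (map predn (L ++ R))).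
  by rewrite map_SP //; case: L HL HL0 {H1 H2 HLR}.
have HG := @good_gen k _ _ H1 H2 H3.
split; [by move/HG => [] | by move=> H; apply/HG; split => //; exact: zeroOK1].
Qed.

Lemma good2 k L R : zfree L -> zfree R -> L != [::] ->
  good k.+1 (L ++ 0 :: 0 :: R) <-> good k (map predn (L ++ R)).
Proof.
move=> HL HR HL0.
have HLR : zfree (L ++ R) by rewrite zfree_cat HL HR.
have H1 : 0 \in L ++ 0 :: 0 :: R by rewrite mem_cat inE eqxx orbT.
have H2 : filter (fun x => x != 0) (L ++ 0 :: 0 :: R) = map S (map predn (L ++ R)).
  by rewrite map_SP // filter_cat /= filter_zfree // filter_zfree.
have H3 : ohead (L ++ 0 :: 0 :: R) = ohead (map S (map predn (L ++ R))).
  by rewrite map_SP //; case: L HL HL0 {H1 H2 HLR}.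
have HG := @good_gen k _ _ H1 H2 H3.
split; [by move/HG => [] | by move=> H; apply/HG; split => //; exact: zeroOK2].
Qed.

Lemma decomp0 (s : seq nat) : 0 \in s -> s = take (index 0 s) s ++ 0 :: drop (index 0 s).+1 s /\ zfree (take (index 0 s) s).
Proof.
move=> H; split.
  rewrite -{1}(cat_take_drop (index 0 s) s) (drop_nth 0) ?index_mem // nth_index //.
by rewrite /zfree in_take_leq ?ltnn // index_size.
Qed.

Definition sv n k (w : n.-tuple 'I_k) : seq nat := map (@nat_of_ord k) w.

Lemma sv_size n k (w : n.-tuple 'I_k) : size (sv w) = n.
Proof. by rewrite size_map size_tuple. Qed.

Lemma sv_inj n k (w1 w2 : n.-tuple 'I_k) : sv w1 = sv w2 -> w1 = w2.
Proof. by move/(inj_map val_inj)/val_inj. Qed.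

Lemma tnth_sv n k (w : n.-tuple 'I_k) (i : 'I_n) : val (tnth w i) = nth 0 (sv w) i.
Proof. by rewrite (nth_map (tnth w i)) ?size_tuple // -tnth_nth. Qed.

Lemma sv_all n k (w : n.-tuple 'I_k) : all (fun x => x < k) (sv w).
Proof. by apply/allP => x /mapP [y _ ->]. Qed.

Definition tup_of n m (s : seq nat) : n.-tuple 'I_m.+1 := [tuple inord (nth 0 s i) | i < n].

Lemma sv_tup_of n m s : size s = n -> all (fun x => x < m.+1) s -> sv (tup_of n m s) = s.
Proof.
move=> Hs Ha; rewrite /sv -[in LHS](map_tnth_enum (tup_of n m s)) -map_comp.
rewrite (eq_map (g := fun i : 'I_n => nth 0 s i)); last first.
  move=> i /=; rewrite tnth_mktuple inordK //; apply: (allP Ha); apply: mem_nth.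
  by rewrite Hs.
have ->: [seq nth 0 s (@nat_of_ord n i) | i <- enum 'I_n] = map (nth 0 s) (map (@nat_of_ord n) (enum 'I_n)).
  by rewrite -map_comp.
by rewrite val_enum_ord -Hs; exact: (mkseq_nth 0 s).
Qed.

Lemma mem_C n k (w : n.-tuple 'I_k) : w \in C_set n k <-> good k (sv w).
Proof.
have Hsz := sv_size w.
rewrite inE; split.
- move=> /and4P [H1 H2 H3 H4]; split.
  + exact: sv_all.
  + move=> a b Hab; apply/negP => /sub3P [i [j [l [Hij Hjl Hl [Ha Hb Hc]]]]].
    rewrite Hsz in Hl.
    have Hi : i < n by lia.
    have Hj : j < n by lia.
    move: Hab; rewrite leq_eqVlt => /orP [/eqP Hab|Hab].
    * move/negP: H2; apply; apply/existsP; exists (Ordinal Hi); apply/existsP; exists (Ordinal Hj).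
      apply/existsP; exists (Ordinal Hl); rewrite -!val_eqE /= !tnth_sv /= Ha Hb Hc Hab eqxx.
      by rewrite Hij Hjl.
    * move/negP: H1; apply; apply/existsP; exists (Ordinal Hi); apply/existsP; exists (Ordinal Hj).
      apply/existsP; exists (Ordinal Hl); rewrite -!val_eqE /= !tnth_sv /= Ha Hb Hc eqxx.
      by rewrite Hij Hjl Hab.
  + move=> a Ha; move/forallP: H3 => /(_ (Ordinal Ha)) H.
    have := map_f (@nat_of_ord k) H; done.
  + move/existsP: H4 => [i /andP [/eqP Hi /eqP Hv]].
    rewrite tnth_sv Hi in Hv; rewrite -Hv.
    case E: (sv w) Hsz => [|x t] /=; last by [].
    by move=> Hn; have := ltn_ord i; rewrite -{2}Hn.
- move=> [Ha Hp Hs Hh]; apply/and4P; split.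
  + apply/existsP => [[i /existsP [j /existsP [l /and4P [Hij Hjl /eqP Hil Hlt]]]]].
    have := Hp (val (tnth w i)) (val (tnth w j)) (ltnW Hlt).
    move/negP; apply; apply/sub3P; exists i, j, l; split => //; first by rewrite Hsz.
    by rewrite -!tnth_sv Hil.
  + apply/existsP => [[i /existsP [j /existsP [l /and4P [Hij Hjl /eqP Hij' /eqP Hjl']]]]].
    have := Hp (val (tnth w i)) (val (tnth w j)).
    rewrite Hij' leqnn => /(_ erefl) /negP; apply; apply/sub3P; exists i, j, l; split => //; first by rewrite Hsz.
    by rewrite -!tnth_sv Hij' Hjl'.
  + apply/forallP => a; have := Hs a (ltn_ord a).
    by rewrite /sv (mem_map val_inj).
  + case E: (sv w) Hh Hsz => [|x t] //= [Hx] Hn.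
    have Hn0 : 0 < n by rewrite -Hn.
    apply/existsP; exists (Ordinal Hn0); rewrite /= tnth_sv E /= Hx eqxx //.
Qed.

Definition ins q (u : seq nat) := take q (map S u) ++ 0 :: drop q (map S u).
Definition ins2 q (u : seq nat) := take q (map S u) ++ 0 :: 0 :: drop q (map S u).
Definition typeA (s : seq nat) := 0 \notin drop (index 0 s).+1 s.

Lemma ins_props (u : seq nat) q : q <= size u ->
  [/\ size (take q (map S u)) = q, zfree (take q (map S u)), zfree (drop q (map S u))
    & take q (map S u) ++ drop q (map S u) = map S u].
Proof.
move=> Hq; split.
- by rewrite size_take size_map; case: ltnP Hq => // H1 H2; apply/eqP; rewrite eqn_leq H1 H2.
- by apply/negP => /mem_take; apply/negP; exact: zfree_mapS.
- by apply/negP => /mem_drop; apply/negP; exact: zfree_mapS.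
- exact: cat_take_drop.
Qed.

Lemma drop_piv (L R : seq nat) x : drop (size L).+1 (L ++ x :: R) = R.
Proof. by rewrite -cat_rcons drop_size_cat // size_rcons. Qed.

Lemma index_piv (L R : seq nat) : zfree L -> index 0 (L ++ 0 :: R) = size L.
Proof. by move=> H; rewrite index_pivot. Qed.

Lemma cardA n k :
  #|C_set n.+2 k.+2 :&: [set w | typeA (sv w)]| = n.+1 * c_num n.+1 k.+1.
Proof.
pose f := fun p : (n.+1).-tuple 'I_k.+1 * 'I_n.+1 => tup_of n.+2 k.+1 (ins (p.2).+1 (sv p.1)).
have Hins : forall (u : (n.+1).-tuple 'I_k.+1) (p : 'I_n.+1), u \in C_set n.+1 k.+1 ->
   [/\ good k.+2 (ins p.+1 (sv u)), size (ins p.+1 (sv u)) = n.+2, typeA (ins p.+1 (sv u))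
     & sv (f (u, p)) = ins p.+1 (sv u)].
  move=> u p Hg0; have Hg := iffLR (mem_C u) Hg0.
  have Hq : p.+1 <= size (sv u) by rewrite sv_size ltn_ord.
  case: (ins_props Hq) => HsL HL HR HLR.
  have G : good k.+2 (ins p.+1 (sv u)).
    rewrite /ins; apply/good1 => //; first by rewrite -size_eq0 HsL.
    by rewrite HLR map_PS.
  have Sz : size (ins p.+1 (sv u)) = n.+2.
    rewrite /ins size_cat /=; have := congr1 size HLR; rewrite size_cat size_map sv_size.
    rewrite addnS; by move=> ->.
  split => //.
  - by rewrite /typeA /ins index_piv // drop_piv.
  - by rewrite /f /= sv_tup_of //; case: G.
have Himg : C_set n.+2 k.+2 :&: [set w | typeA (sv w)] = f @: setX (C_set n.+1 k.+1) setT.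
  apply/setP => w; rewrite in_setI; apply/andP/imsetP.
  - move=> [Hg0 HA]; have Hg := iffLR (mem_C w) Hg0; rewrite inE in HA.
    have Hsz := sv_size w.
    set s := sv w in Hg HA Hsz.
    have H0 : 0 \in s by case: Hg => _ _ Hs _; exact: Hs.
    case: (decomp0 H0); set L := take _ _; set R := drop _ _ => Es HL.
    have HR : zfree R by exact: HA.
    have HL0 : L != [::].
      apply/negP => /eqP EL; case: Hg => _ _ _; rewrite Es EL /=; by case.
    have HLR : zfree (L ++ R) by rewrite zfree_cat HL HR.
    have Gv : good k.+1 (map predn (L ++ R)) by apply/good1 => //; rewrite -Es.
    have Szv : size (map predn (L ++ R)) = n.+1.
      move: Hsz; rewrite Es size_map !size_cat /= addnS; by case.
    have Hl1 : 0 < size L by rewrite lt0n size_eq0.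
    have Hl2 : (size L).-1 < n.+1.
      move: Szv; rewrite size_map size_cat; lia.
    exists (tup_of n.+1 k (map predn (L ++ R)), inord (size L).-1).
      by rewrite in_setX in_setT andbT /=; apply/mem_C; rewrite sv_tup_of //; try exact: Gv; by case: Gv.
    have Ei : ins (size L) (map predn (L ++ R)) = s.
      by rewrite /ins map_SP // take_size_cat // drop_size_cat // -Es.
    apply: sv_inj; rewrite /f /=.
    rewrite (@sv_tup_of n.+1 k (map predn (L ++ R))) //; last by case: Gv.
    rewrite inordK // prednK // Ei sv_tup_of //; by case: Hg.
  - move=> [[u p] Hu ->]; move: Hu; rewrite in_setX in_setT andbT /= => Hu.
    case: (Hins u p Hu) => G Sz TA Ef; split; first by apply/mem_C; rewrite Ef.
    by rewrite inE Ef.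
rewrite Himg card_in_imset; first by rewrite cardsX cardsT card_ord mulnC.
move=> [u1 p1] [u2 p2]; rewrite !in_setX !in_setT !andbT /= => H1 H2 Ef.
case: (Hins u1 p1 H1) => _ _ _ E1; case: (Hins u2 p2 H2) => _ _ _ E2.
have := congr1 (@sv _ _) Ef; rewrite E1 E2 /ins.
have Hq1 : p1.+1 <= size (sv u1) by rewrite sv_size ltn_ord.
have Hq2 : p2.+1 <= size (sv u2) by rewrite sv_size ltn_ord.
case: (ins_props Hq1) => HsL1 HL1 HR1 HLR1.
case: (ins_props Hq2) => HsL2 HL2 HR2 HLR2.
move=> E.
have Ep : p1.+1 = p2.+1.
  have := congr1 (index 0) E; by rewrite !index_piv // HsL1 HsL2.
have Eu : map S (sv u1) = map S (sv u2).
  have := congr1 (filter (fun x => x != 0)) E.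
  by rewrite !filter_cat /= !filter_zfree // HLR1 HLR2.
have := congr1 (map predn) Eu; rewrite !map_PS => /sv_inj ->.
by case: Ep => /val_inj ->.
Qed.

Lemma cardB n k :
  #|C_set n.+2 k.+2 :\: [set w | typeA (sv w)]| = n * c_num n k.+1.
Proof.
pose f := fun p : n.-tuple 'I_k.+1 * 'I_n => tup_of n.+2 k.+1 (ins2 (p.2).+1 (sv p.1)).
have Hins : forall (u : n.-tuple 'I_k.+1) (p : 'I_n), u \in C_set n k.+1 ->
   [/\ good k.+2 (ins2 p.+1 (sv u)), size (ins2 p.+1 (sv u)) = n.+2, ~~ typeA (ins2 p.+1 (sv u))
     & sv (f (u, p)) = ins2 p.+1 (sv u)].
  move=> u p Hg0; have Hg := iffLR (mem_C u) Hg0.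
  have Hq : p.+1 <= size (sv u) by rewrite sv_size ltn_ord.
  case: (ins_props Hq) => HsL HL HR HLR.
  have G : good k.+2 (ins2 p.+1 (sv u)).
    rewrite /ins2; apply/good2 => //; first by rewrite -size_eq0 HsL.
    by rewrite HLR map_PS.
  have Sz : size (ins2 p.+1 (sv u)) = n.+2.
    rewrite /ins2 size_cat /=; have := congr1 size HLR; rewrite size_cat size_map sv_size.
    rewrite !addnS; by move=> ->.
  split => //.
  - by rewrite /typeA /ins2 index_piv // drop_piv negbK inE eqxx.
  - by rewrite /f /= sv_tup_of //; case: G.
have Himg : C_set n.+2 k.+2 :\: [set w | typeA (sv w)] = f @: setX (C_set n k.+1) setT.
  apply/setP => w; rewrite in_setD andbC; apply/andP/imsetP.
  - move=> [Hg0 HA]; have Hg := iffLR (mem_C w) Hg0; rewrite inE negbK in HA.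
    have Hsz := sv_size w.
    set s := sv w in Hg HA Hsz.
    have H0 : 0 \in s by case: Hg => _ _ Hs _; exact: Hs.
    case: (decomp0 H0); set L := take _ _; set R1 := drop _ _ => Es HL.
    case: (decomp0 HA); rewrite -/R1; set M := take _ _; set R := drop _ _ => EM HM.
    have HM0 : M = [::].
      case EM' : M HM => [//|m M'] HM.
      have Hm : m != 0 by move: HM; rewrite /zfree inE negb_or eq_sym => /andP [].
      case: Hg => _ Hp _ _; have := Hp 0 m (leq0n m); move/negP; case.
      rewrite Es EM EM' subseq_skip0 //= eqxx.
      by rewrite sub1seq mem_cat inE eqxx orbT.
    rewrite HM0 /= in EM.
    have HR : zfree R.
      apply/negP => H0R; case: Hg => _ Hp _ _; have := Hp 0 0 (leqnn 0); move/negP; case.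
      by rewrite Es EM subseq_skip0 //= sub1seq.
    rewrite EM in Es.
    have HL0 : L != [::].
      apply/negP => /eqP EL; case: Hg => _ _ _; rewrite Es EL /=; by case.
    have HLR : zfree (L ++ R) by rewrite zfree_cat HL HR.
    have Gv : good k.+1 (map predn (L ++ R)) by apply/good2 => //; rewrite -Es.
    have Szv : size (map predn (L ++ R)) = n.
      move: Hsz; rewrite Es size_map !size_cat /= !addnS; by case.
    have Hl1 : 0 < size L by rewrite lt0n size_eq0.
    have Hl2 : (size L).-1 < n.
      move: Szv; rewrite size_map size_cat; lia.
    exists (tup_of n k (map predn (L ++ R)), Ordinal Hl2).
      by rewrite in_setX in_setT andbT /=; apply/mem_C; rewrite sv_tup_of //; try exact: Gv; by case: Gv.
    have Ei : ins2 (size L) (map predn (L ++ R)) = s.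
      by rewrite /ins2 map_SP // take_size_cat // drop_size_cat // -Es.
    apply: sv_inj; rewrite /f /=.
    rewrite (@sv_tup_of n k (map predn (L ++ R))) //; last by case: Gv.
    rewrite prednK // Ei sv_tup_of //; by case: Hg.
  - move=> [[u p] Hu ->]; move: Hu; rewrite in_setX in_setT andbT /= => Hu.
    case: (Hins u p Hu) => G Sz TA Ef; split; first by apply/mem_C; rewrite Ef.
    by rewrite inE Ef.
rewrite Himg card_in_imset; first by rewrite cardsX cardsT card_ord mulnC.
move=> [u1 p1] [u2 p2]; rewrite !in_setX !in_setT !andbT /= => H1 H2 Ef.
case: (Hins u1 p1 H1) => _ _ _ E1; case: (Hins u2 p2 H2) => _ _ _ E2.
have := congr1 (@sv _ _) Ef; rewrite E1 E2 /ins2.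
have Hq1 : p1.+1 <= size (sv u1) by rewrite sv_size ltn_ord.
have Hq2 : p2.+1 <= size (sv u2) by rewrite sv_size ltn_ord.
case: (ins_props Hq1) => HsL1 HL1 HR1 HLR1.
case: (ins_props Hq2) => HsL2 HL2 HR2 HLR2.
move=> E.
have Ep : p1.+1 = p2.+1.
  have := congr1 (index 0) E; by rewrite !index_piv // HsL1 HsL2.
have Eu : map S (sv u1) = map S (sv u2).
  have := congr1 (filter (fun x => x != 0)) E.
  by rewrite !filter_cat /= !filter_zfree // HLR1 HLR2.
have := congr1 (map predn) Eu; rewrite !map_PS => /sv_inj ->.
by case: Ep => /val_inj ->.
Qed.

Theorem mainTheorem3 (n k : nat) : 2 <= n -> 2 <= k ->
  c_num n k = (n - 1) * c_num (n - 1) (k - 1) + (n - 2) * c_num (n - 2) (k - 1).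
Proof.
case: n => [|[|n]] //; case: k => [|[|k]] // _ _.
have -> : n.+2 - 1 = n.+1 by lia.
have -> : n.+2 - 2 = n by lia.
have -> : k.+2 - 1 = k.+1 by lia.
by rewrite /c_num -(cardsID [set w | typeA (sv w)] (C_set n.+2 k.+2)) cardA cardB.
Qed.
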